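(* Let $(\mathbf a_1,\mathbf a_2,\mathbf a_3)$ be a nondegenerate m-triangle, and let $\mathbf t_i$ be the torque with respect to the center of mass $O$ of the Newtonian gravitational forces acting at $P_i$, i.e. $\mathbf t_i=\mathbf a_i\times\sum_{j\ne i}\frac{m_im_j}{r_{ij}^3}(\mathbf a_j-\mathbf a_i)$. Then, for $i$ mod $3$, $$\mathbf t_i=\dot{\mathbf\Omega}_i=2m_1m_2m_3\Delta\Big(\frac1{r_{i,i+1}^3}-\frac1{r_{i,i+2}^3}\Big)\mathbf n,$$ where $\mathbf n$ is the unit normal vector such that $(\mathbf a_1,\mathbf a_2,\mathbf n)$ is right-handed.
   Context: Masses $m_1,m_2,m_3>0$ with $m_1+m_2+m_3=1$; position vectors $\mathbf a_i=\overrightarrow{OP_i}$ with $\sum m_i\mathbf a_i=0$; $r_{ij}=|\mathbf a_i-\mathbf a_j|$; $\Delta$ is the area of the triangle $P_1P_2P_3$; $\mathbf\Omega_i=m_i\mathbf a_i\times\dot{\mathbf a}_i$ is the individual angular momentum, whose derivative along a motion satisfying Newton's equations $m_i\ddot{\mathbf a}_i=\sum_{j\neq i}\frac{m_im_j}{r_{ij}^3}(\mathbf a_j-\mathbf a_i)$ equals $\mathbf t_i$. *)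

(* Defs.v *)
From Stdlib Require Import Reals Lra.
Open Scope R_scope.

Record V3 := mkV3 { vx : R ; vy : R ; vz : R }.

Definition vadd (u v : V3) : V3 := mkV3 (vx u + vx v) (vy u + vy v) (vz u + vz v).
Definition vsub (u v : V3) : V3 := mkV3 (vx u - vx v) (vy u - vy v) (vz u - vz v).
Definition vscale (c : R) (u : V3) : V3 := mkV3 (c * vx u) (c * vy u) (c * vz u).
Definition vzero : V3 := mkV3 0 0 0.
Definition cross (u v : V3) : V3 :=
  mkV3 (vy u * vz v - vz u * vy v)
       (vz u * vx v - vx u * vz v)
       (vx u * vy v - vy u * vx v).
Definition dot (u v : V3) : R := vx u * vx v + vy u * vy v + vz u * vz v.
Definition vnorm (u : V3) : R := sqrt (dot u u).

(* A configuration: masses m 0, m 1, m 2 and positions a 0, a 1, a 2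
   (indices are natural numbers; only 0,1,2 are used, taken mod 3). *)
Definition r (a : nat -> V3) (i j : nat) : R := vnorm (vsub (a i) (a j)).

Definition area (a : nat -> V3) : R :=
  vnorm (cross (vsub (a 1%nat) (a 0%nat)) (vsub (a 2%nat) (a 0%nat))) / 2.

Definition m_triangle (m : nat -> R) (a : nat -> V3) : Prop :=
  0 < m 0%nat /\ 0 < m 1%nat /\ 0 < m 2%nat /\
  m 0%nat + m 1%nat + m 2%nat = 1 /\
  vadd (vadd (vscale (m 0%nat) (a 0%nat)) (vscale (m 1%nat) (a 1%nat)))
       (vscale (m 2%nat) (a 2%nat)) = vzero.

Definition nondegenerate (a : nat -> V3) : Prop := area a <> 0.

Definition idx (i k : nat) : nat := Nat.modulo (i + k) 3.

Definition force (m : nat -> R) (a : nat -> V3) (i : nat) : V3 :=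
  vadd (vscale (m i * m (idx i 1) / (r a i (idx i 1)) ^ 3) (vsub (a (idx i 1)) (a i)))
       (vscale (m i * m (idx i 2) / (r a i (idx i 2)) ^ 3) (vsub (a (idx i 2)) (a i))).

Definition torque (m : nat -> R) (a : nat -> V3) (i : nat) : V3 :=
  cross (a i) (force m a i).

Definition ang_mom (m : nat -> R) (a adot : nat -> V3) (i : nat) : V3 :=
  vscale (m i) (cross (a i) (adot i)).

(* Unit normal n such that (a_1, a_2, n) is right-handed (a_1 = a 0, a_2 = a 1). *)
Definition unit_normal (a : nat -> V3) : V3 :=
  let c := cross (a 0%nat) (a 1%nat) in vscale (/ vnorm c) c.

Definition has_vderiv (f : R -> V3) (t : R) (d : V3) : Prop :=
  derivable_pt_lim (fun s => vx (f s)) t (vx d) /\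
  derivable_pt_lim (fun s => vy (f s)) t (vy d) /\
  derivable_pt_lim (fun s => vz (f s)) t (vz d).

Definition torque_formula (m : nat -> R) (a : nat -> V3) (i : nat) : V3 :=
  vscale (2 * m 0%nat * m 1%nat * m 2%nat * area a *
          (/ (r a i (idx i 1)) ^ 3 - / (r a i (idx i 2)) ^ 3))
         (unit_normal a).

(* Main.v *)
Require Import Defs.
From Stdlib Require Import Reals Lra Lia.
Open Scope R_scope.

Lemma dcomp f1 f2 g1 g2 c t d1 d2 e1 e2 :
  derivable_pt_lim f1 t d1 -> derivable_pt_lim g1 t e1 ->
  derivable_pt_lim f2 t d2 -> derivable_pt_lim g2 t e2 ->
  derivable_pt_lim (fun s => c * (f1 s * g1 s - f2 s * g2 s)) t
    (c*((d1*g1 t + f1 t*e1) - (d2*g2 t + f2 t*e2))).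
Proof.
  intros H1 H2 H3 H4.
  apply (derivable_pt_lim_scal (fun s => f1 s * g1 s - f2 s * g2 s)).
  apply (derivable_pt_lim_minus (fun s => f1 s * g1 s) (fun s => f2 s * g2 s)).
  - apply (derivable_pt_lim_mult f1 g1); auto.
  - apply (derivable_pt_lim_mult f2 g2); auto.
Qed.

Lemma key (m0 m1 m2 : R) (a0 a1 a2 : V3) :
  m0 + m1 + m2 = 1 ->
  vadd (vadd (vscale m0 a0) (vscale m1 a1)) (vscale m2 a2) = vzero ->
  let C := cross (vsub a1 a0) (vsub a2 a0) in
  cross a1 a2 = vscale m0 C /\ cross a2 a0 = vscale m1 C /\ cross a0 a1 = vscale m2 C.
Proof.
  intros S E C; subst C.
  destruct a0 as [x0 y0 z0]; destruct a1 as [x1 y1 z1]; destruct a2 as [x2 y2 z2].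
  unfold vadd, vscale, vzero in E; simpl in E. injection E; intros Ez Ey Ex.
  unfold cross, vsub, vscale; simpl.
  set (Sx := m0*x0+m1*x1+m2*x2) in *.
  set (Sy := m0*y0+m1*y1+m2*y2) in *.
  set (Sz := m0*z0+m1*z1+m2*z2) in *.
  set (T := m0+m1+m2) in *.
  split; [|split]; f_equal.
  all: match goal with |- ?l = ?r =>
    first
    [ assert (l - r = (1 - T) * l - (Sy*(z1-z2) - Sz*(y1-y2))) by (unfold Sx,Sy,Sz,T; ring)
    | assert (l - r = (1 - T) * l - (Sz*(x1-x2) - Sx*(z1-z2))) by (unfold Sx,Sy,Sz,T; ring)
    | assert (l - r = (1 - T) * l - (Sx*(y1-y2) - Sy*(x1-x2))) by (unfold Sx,Sy,Sz,T; ring)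
    | assert (l - r = (1 - T) * l - (Sy*(z2-z0) - Sz*(y2-y0))) by (unfold Sx,Sy,Sz,T; ring)
    | assert (l - r = (1 - T) * l - (Sz*(x2-x0) - Sx*(z2-z0))) by (unfold Sx,Sy,Sz,T; ring)
    | assert (l - r = (1 - T) * l - (Sx*(y2-y0) - Sy*(x2-x0))) by (unfold Sx,Sy,Sz,T; ring)
    | assert (l - r = (1 - T) * l - (Sy*(z0-z1) - Sz*(y0-y1))) by (unfold Sx,Sy,Sz,T; ring)
    | assert (l - r = (1 - T) * l - (Sz*(x0-x1) - Sx*(z0-z1))) by (unfold Sx,Sy,Sz,T; ring)
    | assert (l - r = (1 - T) * l - (Sx*(y0-y1) - Sy*(x0-x1))) by (unfold Sx,Sy,Sz,T; ring) ] end.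
  all: rewrite S, Ex, Ey, Ez in *; lra.
Qed.

Lemma cross_force u v w k1 k2 :
  cross u (vadd (vscale k1 (vsub v u)) (vscale k2 (vsub w u))) =
  vadd (vscale k1 (cross u v)) (vscale (-k2) (cross w u)).
Proof.
  destruct u, v, w; unfold cross, vadd, vscale, vsub; simpl; f_equal; ring.
Qed.

Lemma vnorm_scale c u : 0 < c -> vnorm (vscale c u) = c * vnorm u.
Proof.
  intros Hc. destruct u as [x y z]; unfold vnorm, dot, vscale; simpl.
  replace (c * x * (c * x) + c * y * (c * y) + c * z * (c * z))
    with (c² * (x*x + y*y + z*z)) by (unfold Rsqr; ring).
  rewrite sqrt_mult_alt by apply Rle_0_sqr.
  rewrite sqrt_Rsqr by lra. reflexivity.
Qed.

Lemma fin (C : V3) (N k1 k2 al be m0 m1 m2 p q : R) :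
  vnorm C = N -> N <> 0 -> 0 < m2 ->
  k1 * al = m0*m1*m2*p -> k2 * be = m0*m1*m2*q ->
  vadd (vscale k1 (vscale al C)) (vscale (-k2) (vscale be C)) =
  vscale (2*m0*m1*m2*(N/2)*(p - q)) (vscale (/ (m2 * N)) (vscale m2 C)).
Proof.
  intros HN HN0 Hm H1 H2. destruct C as [x y z]; unfold vadd, vscale; simpl.
  f_equal.
  - transitivity ((k1*al - k2*be)*x); [ring|]. rewrite H1, H2. field; lra.
  - transitivity ((k1*al - k2*be)*y); [ring|]. rewrite H1, H2. field; lra.
  - transitivity ((k1*al - k2*be)*z); [ring|]. rewrite H1, H2. field; lra.
Qed.

Lemma part1 (m : nat -> R) (a : nat -> V3) :
  m_triangle m a -> nondegenerate a ->
  forall i : nat, (i < 3)%nat -> torque m a i = torque_formula m a i.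
Proof.
  intros [H0 [H1 [H2 [S E]]]] ND i Hi.
  destruct (key _ _ _ _ _ _ S E) as [K12 [K20 K01]].
  set (C := cross (vsub (a 1%nat) (a 0%nat)) (vsub (a 2%nat) (a 0%nat))) in *.
  assert (HA : area a = vnorm C / 2) by reflexivity.
  assert (HN : vnorm C <> 0) by (intro Hc; apply ND; rewrite HA, Hc; lra).
  unfold torque, force, torque_formula, unit_normal.
  rewrite HA, K01, vnorm_scale by lra.
  destruct i as [|[|[|i]]]; [| | | lia]; cbn [idx Nat.modulo Nat.add]; simpl.
  - rewrite cross_force, K01, K20. apply fin; auto; unfold Rdiv; ring.
  - rewrite cross_force, K12, K01. apply fin; auto; unfold Rdiv; ring.
  - rewrite cross_force, K20, K12. apply fin; auto; unfold Rdiv; ring.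
Qed.

Theorem mainTheorem10 (m : nat -> R) (a : nat -> V3) :
  m_triangle m a -> nondegenerate a ->
  forall i : nat, (i < 3)%nat ->
    torque m a i = torque_formula m a i /\
    (forall (q v acc : R -> nat -> V3) (t0 : R),
        q t0 = a ->
        (forall j, (j < 3)%nat ->
            has_vderiv (fun s => q s j) t0 (v t0 j) /\
            has_vderiv (fun s => v s j) t0 (acc t0 j) /\
            vscale (m j) (acc t0 j) = force m (q t0) j) ->
        has_vderiv (fun s => ang_mom m (q s) (v s) i) t0 (torque_formula m a i)).
Proof.
  intros MT ND i Hi.
  pose proof (part1 m a MT ND i Hi) as P1.
  split; [exact P1|].
  intros q v acc t0 Hq H.
  destruct (H i Hi) as [[Dx [Dy Dz]] [[Ex [Ey Ez]] F]].
  rewrite <- P1. unfold torque. rewrite <- Hq, <- F.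
  unfold has_vderiv, ang_mom, cross, vscale; simpl.
  split; [|split].
  - match goal with |- derivable_pt_lim _ _ ?l =>
      replace l with (m i * ((vy (v t0 i) * vz (v t0 i) + vy (q t0 i) * vz (acc t0 i))
                          - (vz (v t0 i) * vy (v t0 i) + vz (q t0 i) * vy (acc t0 i)))) by ring end.
    apply (dcomp (fun s => vy (q s i)) (fun s => vz (q s i)) (fun s => vz (v s i)) (fun s => vy (v s i))); auto.
  - match goal with |- derivable_pt_lim _ _ ?l =>
      replace l with (m i * ((vz (v t0 i) * vx (v t0 i) + vz (q t0 i) * vx (acc t0 i))
                          - (vx (v t0 i) * vz (v t0 i) + vx (q t0 i) * vz (acc t0 i)))) by ring end.
    apply (dcomp (fun s => vz (q s i)) (fun s => vx (q s i)) (fun s => vx (v s i)) (fun s => vz (v s i))); auto.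
  - match goal with |- derivable_pt_lim _ _ ?l =>
      replace l with (m i * ((vx (v t0 i) * vy (v t0 i) + vx (q t0 i) * vy (acc t0 i))
                          - (vy (v t0 i) * vx (v t0 i) + vy (q t0 i) * vx (acc t0 i)))) by ring end.
    apply (dcomp (fun s => vx (q s i)) (fun s => vy (q s i)) (fun s => vy (v s i)) (fun s => vx (v s i))); auto.
Qed.
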